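(* Let $P=(X,\leq)$ be a partially ordered set whose incomparability graph is locally finite. Then there exist a partition of $X$ into antichains and a chain $C\subseteq X$ of $P$ such that $C$ intersects every member of the partition.
   Context: The incomparability graph of a poset $P=(X,\leq)$ is the graph with vertex set $X$ whose edges are the pairs $\{u,v\}$ of distinct elements that are incomparable in $P$ (neither $u\leq v$ nor $v\leq u$). A graph is locally finite if every vertex is adjacent to finitely many vertices. An antichain is a set of pairwise incomparable elements; a chain is a set of pairwise comparable elements. *)

(* Defs.v *)
From Stdlib Require Import List.

Set Implicit Arguments.
Section Posets.
Variable X : Type.
Variable le : X -> X -> Prop.

Definition is_partial_order : Prop :=
  (forall x, le x x) /\
  (forall x y, le x y -> le y x -> x = y) /\
  (forall x y z, le x y -> le y z -> le x z).

Definition comparable (u v : X) : Prop := le u v \/ le v u.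

Definition incomp_edge (u v : X) : Prop := u <> v /\ ~ comparable u v.

Definition locally_finite (E : X -> X -> Prop) : Prop :=
  forall v, exists l : list X, forall u, E v u -> In u l.

Definition antichain (A : X -> Prop) : Prop :=
  forall u v, A u -> A v -> u <> v -> ~ comparable u v.

Definition chain (C : X -> Prop) : Prop :=
  forall u v, C u -> C v -> comparable u v.

(* A partition of X: a family of nonempty, pairwise disjoint blocks
   covering X (blocks that share a point are equal as sets). *)
Definition is_partition (P : (X -> Prop) -> Prop) : Prop :=
  (forall B, P B -> exists x, B x) /\
  (forall x, exists B, P B /\ B x) /\
  (forall B B', P B -> P B' -> (exists x, B x /\ B' x) ->
     forall y, B y <-> B' y).

End Posets.

(* Main.v *)
Require Import Defs.
From Stdlib Require Import List Classical ClassicalEpsilon Lia.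
From mathcomp Require classical_sets.
Set Implicit Arguments.

Lemma max_above (X : Type) (le : X -> X -> Prop) (Hpo : is_partial_order le)
  (Q : X -> Prop) (l : list X) : forall x, Q x ->
  exists m, Q m /\ (m = x \/ In m l) /\ le x m /\
    forall y, In y l -> Q y -> le m y -> y = m.
Proof.
  destruct Hpo as [Hr [Ha Ht]].
  induction l as [|a l IH]; intros x Qx.
  - exists x. repeat split; auto. intros y [].
  - destruct (IH x Qx) as [m' [Qm' [Hm' [Hxm' Hmax']]]].
    destruct (classic (Q a /\ le m' a /\ a <> m')) as [[Qa [Hma Hne]]|Hn].
    + destruct (IH a Qa) as [m'' [Qm'' [Hm'' [Ham'' Hmax'']]]].
      exists m''. split; [exact Qm''|]. split.
      { right. destruct Hm'' as [->|H]; [left; auto|right; auto]. }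
      split; [eauto|].
      intros y [<-|Hy] Qy Hy2.
      * apply Ha; auto.
      * apply Hmax''; auto.
    + exists m'. split; [exact Qm'|]. split.
      { destruct Hm' as [->|H]; [left; auto|right; right; auto]. }
      split; [exact Hxm'|].
      intros y [<-|Hy] Qy Hy2.
      * apply NNPP. intro Hne. apply Hn. auto.
      * apply Hmax'; auto.
Qed.

Lemma split_list (X : Type) (P : X -> Prop) (l : list X) :
  exists l1 l2, length l1 + length l2 = length l /\
    (forall x, In x l <-> In x l1 \/ In x l2) /\
    (forall x, In x l1 -> P x) /\ (forall x, In x l2 -> ~ P x).
Proof.
  induction l as [|a l [l1 [l2 [Hlen [Hin [H1 H2]]]]]].
  - exists nil, nil. simpl. repeat split; try tauto.
  - destruct (classic (P a)) as [Pa|Pa].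
    + exists (a :: l1), l2. simpl. split; [lia|]. split.
      { intro x. rewrite Hin. tauto. }
      split; [intros x [<-|Hx]; auto|exact H2].
    + exists l1, (a :: l2). simpl. split; [lia|]. split.
      { intro x. rewrite Hin. tauto. }
      split; [exact H1|intros x [<-|Hx]; auto].
Qed.

Definition SolF1 (X : Type) (le : X -> X -> Prop) (F : list X) (g : X -> X) : Prop :=
  (forall x, In x F -> In (g x) F) /\
  (forall x y, In x F -> In y F -> g x = y -> g y = y) /\
  (forall x y, In x F -> In y F -> g x = x -> g y = y -> comparable le x y) /\
  (forall x y, In x F -> In y F -> x <> y -> g x = g y -> ~ comparable le x y).

Lemma finite_thm (X : Type) (le : X -> X -> Prop) (Hpo : is_partial_order le) :
  forall n (F : list X), length F <= n -> exists g, SolF1 le F g.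
Proof.
  pose proof Hpo as [Hr [Ha Ht]].
  induction n as [|n IH]; intros F HF.
  - destruct F; [|simpl in HF; lia].
    exists (fun x => x). unfold SolF1; simpl; repeat split; tauto.
  - destruct F as [|a F0].
    { exists (fun x => x). unfold SolF1; simpl; repeat split; tauto. }
    set (F := a :: F0) in *.
    set (Pmax := fun x => forall y, In y F -> le x y -> y = x).
    destruct (split_list Pmax F) as [M [R [Hlen [Hin [HM HR]]]]].
    assert (inM : forall m, In m F -> Pmax m -> In m M).
    { intros m Hm Pm. apply Hin in Hm. destruct Hm as [?|Hm]; auto.
      exfalso. exact (HR m Hm Pm). }
    assert (topF : forall y, In y F -> exists m, In m M /\ le y m).
    { intros y Hy.
      destruct (max_above Hpo (fun _ => True) F y I) as [m [_ [Hm [Hym Hmax]]]].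
      exists m. split; auto. apply inM.
      - destruct Hm as [->|Hm]; auto.
      - intros z Hz Hmz. apply Hmax; auto. }
    destruct (topF a (or_introl eq_refl)) as [m0 [Hm0 _]].
    assert (HlenR : length R <= n).
    { destruct M; [destruct Hm0|]. simpl in Hlen. simpl in HF. lia. }
    destruct (IH R HlenR) as [g' [G1 [G2 [G3 G4]]]].
    assert (RF : forall x, In x R -> In x F) by (intros; apply Hin; auto).
    assert (MF : forall x, In x M -> In x F) by (intros; apply Hin; auto).
    assert (MnR : forall x, In x M -> ~ In x R).
    { intros x H1 H2. exact (HR x H2 (HM x H1)). }
    assert (FMR : forall x, In x F -> ~ In x R -> In x M).
    { intros x H1 H2. apply Hin in H1. tauto. }
    assert (Hstar : exists ms, In ms M /\
       forall c, In c R -> g' c = c -> le c ms).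
    { destruct (classic (exists c, In c R /\ g' c = c)) as [[c [HcR Hc]]|Hno].
      - destruct (max_above Hpo (fun z => In z R /\ g' z = z) R c (conj HcR Hc))
          as [t [[HtR Htt] [_ [_ Htmax]]]].
        assert (Hnt : ~ Pmax t) by (apply HR; auto).
        unfold Pmax in Hnt.
        apply not_all_ex_not in Hnt. destruct Hnt as [y Hy].
        assert (Hy' : In y F /\ le t y /\ y <> t) by tauto.
        destruct Hy' as [HyF [Hty _]].
        destruct (topF y HyF) as [m [HmM Hym]].
        exists m. split; auto.
        intros c' Hc'R Hc'.
        destruct (G3 c' t Hc'R HtR Hc' Htt) as [H|H].
        + eauto.
        + assert (c' = t) by (apply Htmax; auto). subst. eauto.
      - exists m0. split; auto. intros c Hc Hgc. exfalso. apply Hno. eauto. }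
    destruct Hstar as [ms [Hms Hmsc]].
    exists (fun x => if excluded_middle_informative (In x R) then g' x else ms).
    unfold SolF1. split; [|split; [|split]].
    + intros x Hx. destruct (excluded_middle_informative (In x R)); auto.
    + intros x y Hx Hy Hg.
      destruct (excluded_middle_informative (In x R)) as [HxR|HxR].
      * assert (HyR : In y R) by (subst y; auto).
        destruct (excluded_middle_informative (In y R)); [|contradiction].
        eapply G2; eauto.
      * subst y. destruct (excluded_middle_informative (In ms R)); auto.
        exfalso. eapply MnR; eauto.
    + intros x y Hx Hy Hgx Hgy.
      destruct (excluded_middle_informative (In x R)) as [HxR|HxR];
      destruct (excluded_middle_informative (In y R)) as [HyR|HyR].
      * auto.
      * subst y. left. auto.
      * subst x. right. auto.
      * subst x y. left. auto.
    + intros x y Hx Hy Hne Hg.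
      destruct (excluded_middle_informative (In x R)) as [HxR|HxR];
      destruct (excluded_middle_informative (In y R)) as [HyR|HyR].
      * auto.
      * exfalso. apply (MnR ms Hms). rewrite <- Hg. auto.
      * exfalso. apply (MnR ms Hms). rewrite Hg. auto.
      * assert (PX : Pmax x) by (apply HM; auto).
        assert (PY : Pmax y) by (apply HM; auto).
        intros [H|H].
        -- apply Hne. symmetry. apply PX; auto.
        -- apply Hne. apply PY; auto.
Qed.

Definition Sol (X : Type) (le : X -> X -> Prop) (nb : X -> list X) (F : list X) (g : X -> X) : Prop :=
  (forall x, In x F -> In (g x) (x :: nb x)) /\
  (forall x y, In x F -> In y F -> g x = y -> g y = y) /\
  (forall x y, In x F -> In y F -> g x = x -> g y = y -> comparable le x y) /\
  (forall x y, In x F -> In y F -> x <> y -> g x = g y -> ~ comparable le x y).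

Lemma Sol_mono (X : Type) (le : X -> X -> Prop) (nb : X -> list X) F F' g :
  incl F' F -> Sol le nb F g -> Sol le nb F' g.
Proof.
  intros Hi [S1 [S2 [S3 S4]]]. unfold Sol. repeat split; intros; eauto.
Qed.

Lemma SolF1_Sol (X : Type) (le : X -> X -> Prop) (nb : X -> list X)
  (Hnb : forall v u, incomp_edge le v u -> In u (nb v)) F g :
  SolF1 le F g -> Sol le nb F g.
Proof.
  intros [S1 [S2 [S3 S4]]]. unfold Sol. split; [|split; [|split]]; auto.
  intros x Hx. destruct (classic (g x = x)) as [E|E].
  - left. auto.
  - right. apply Hnb. split; [auto|].
    apply S4; auto. symmetry. apply (S2 x (g x)); auto.
Qed.

Definition Good (X : Type) (le : X -> X -> Prop) (nb : X -> list X) (A : X * X -> Prop) : Prop :=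
  forall F : list X, exists g, Sol le nb F g /\ forall x v, In x F -> A (x, v) -> g x = v.

Lemma Good_fun (X : Type) (le : X -> X -> Prop) (nb : X -> list X) A :
  Good le nb A -> forall x v w, A (x, v) -> A (x, w) -> v = w.
Proof.
  intros HG x v w Hv Hw. destruct (HG (x :: nil)) as [g [_ Hg]].
  rewrite <- (Hg x v), <- (Hg x w); simpl; auto.
Qed.

Lemma Good_empty (X : Type) (le : X -> X -> Prop) (Hpo : is_partial_order le) (nb : X -> list X)
  (Hnb : forall v u, incomp_edge le v u -> In u (nb v)) :
  Good le nb (fun _ => False).
Proof.
  intro F. destruct (finite_thm Hpo (n:=length F) F (le_n _)) as [g Hg].
  exists g. split; [eapply SolF1_Sol; eauto|]. intros; contradiction.
Qed.

Lemma combine_bad (X : Type) (Bad : X -> list X -> Prop)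
  (Hup : forall v F F', incl F F' -> Bad v F -> Bad v F') :
  forall L : list X, (forall v, In v L -> exists F, Bad v F) ->
  exists F, forall v, In v L -> Bad v F.
Proof.
  induction L as [|a L IH]; intros H.
  - exists nil. intros v [].
  - destruct (H a (or_introl eq_refl)) as [Fa Ha].
    destruct IH as [F HF]. { intros v Hv. apply H. right. auto. }
    exists (Fa ++ F). intros v [<-|Hv].
    + eapply Hup; [|exact Ha]. apply incl_appl, incl_refl.
    + eapply Hup; [|apply HF; auto]. apply incl_appr, incl_refl.
Qed.

Lemma Good_union (X : Type) (le : X -> X -> Prop) (Hpo : is_partial_order le) (nb : X -> list X)
  (Hnb : forall v u, incomp_edge le v u -> In u (nb v))
  (Fam : (X * X -> Prop) -> Prop) :
  (forall A, Fam A -> Good le nb A) ->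
  (forall A B, Fam A -> Fam B -> (forall p, A p -> B p) \/ (forall p, B p -> A p)) ->
  Good le nb (fun p => exists2 A, Fam A & A p).
Proof.
  intros HG Htot.
  set (U := fun p => exists2 A, Fam A & A p).
  assert (Hc : forall F, exists B, (Fam B \/ forall p, ~ B p) /\
             forall x v, In x F -> U (x, v) -> B (x, v)).
  { induction F as [|x F' [B' [HB' HB'F]]].
    - exists (fun _ => False). split; [right; auto|]. intros x v [].
    - destruct (classic (exists v, U (x, v))) as [[v [A1 HA1 HA1v]]|Hno].
      + assert (HB : exists B, Fam B /\ (forall p, B' p -> B p) /\ B (x, v)).
        { destruct HB' as [HB'|HB'].
          - destruct (Htot B' A1 HB' HA1) as [H|H].
            + exists A1. auto.
            + exists B'. auto.
          - exists A1. split; auto. split; auto. intros p Hp. exfalso. exact (HB' p Hp). }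
        destruct HB as [B [HBF [HBsub HBx]]].
        exists B. split; [left; auto|].
        intros y w [<-|Hy] [A2 HA2 HA2w].
        * assert (w = v).
          { destruct (Htot A2 B HA2 HBF) as [H|H].
            - apply (Good_fun (HG B HBF) x); auto.
            - apply (Good_fun (HG A2 HA2) x); auto. }
          subst. auto.
        * apply HBsub, HB'F; auto. exists A2; auto.
      + exists B'. split; auto.
        intros y w [<-|Hy] HU.
        * exfalso. apply Hno. eauto.
        * auto. }
  intro F. destruct (Hc F) as [B [[HBF|HBe] HBF2]].
  - destruct (HG B HBF F) as [g [Hg Hag]]. exists g. split; auto.
  - destruct (Good_empty Hpo nb Hnb F) as [g [Hg _]]. exists g. split; auto.
    intros x v Hx HU. exfalso. exact (HBe _ (HBF2 x v Hx HU)).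
Qed.

Lemma Good_max_total (X : Type) (le : X -> X -> Prop) (nb : X -> list X) (A : X * X -> Prop) :
  Good le nb A ->
  (forall B : X * X -> Prop, classical_sets.proper A B -> ~ Good le nb B) ->
  forall x, exists v, A (x, v).
Proof.
  intros HG Hmax x0. apply NNPP. intro Hno.
  set (Bad := fun v F => forall g, Sol le nb F g ->
                ~ (forall x w, In x F -> (A (x, w) \/ (x, w) = (x0, v)) -> g x = w)).
  assert (Hup : forall v F F', incl F F' -> Bad v F -> Bad v F').
  { intros v F F' Hi HB g Hg Hag. apply (HB g (Sol_mono Hi Hg)). intros; auto. }
  assert (Hall : forall v, In v (x0 :: nb x0) -> exists F, Bad v F).
  { intros v _. 
    assert (Hp : classical_sets.proper A (fun p => A p \/ p = (x0, v))).
    { unfold classical_sets.proper, classical_sets.subset. split. - intros p Hp. left. exact Hp.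
      - intro H. apply Hno. exists v. apply H. right. reflexivity. }
    pose proof (Hmax _ Hp) as HnG. unfold Good in HnG.
    apply not_all_ex_not in HnG. destruct HnG as [F HF]. exists F.
    intros g Hg Hag. apply HF. exists g. split; auto. }
  destruct (combine_bad Bad Hup (x0 :: nb x0) Hall) as [F HF].
  destruct (HG (x0 :: F)) as [g [Hg Hag]].
  assert (Hgx0 : In (g x0) (x0 :: nb x0)) by (apply (proj1 Hg); left; auto).
  apply (HF (g x0) Hgx0 g).
  - eapply Sol_mono; [|exact Hg]. intros z Hz. right. auto.
  - intros x w Hx [Hw|Hw].
    + apply Hag; auto. right; auto.
    + injection Hw as -> ->. auto.
Qed.

Theorem theorem4 (X : Type) (le : X -> X -> Prop)
  (Hpo : is_partial_order le)
  (Hlf : locally_finite (incomp_edge le)) :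
  exists P : (X -> Prop) -> Prop,
    is_partition (X:=X) P /\
    (forall B, P B -> antichain le B) /\
    exists C : X -> Prop,
      chain le C /\
      (forall B, P B -> exists x, C x /\ B x).
Proof.
  set (nb := fun v => proj1_sig (constructive_indefinite_description _ (Hlf v))).
  assert (Hnb : forall v u, incomp_edge le v u -> In u (nb v)).
  { intros v u H. unfold nb. destruct (constructive_indefinite_description _ (Hlf v)) as [l Hl].
    simpl. auto. }
  destruct (@classical_sets.Zorn_bigcup (X * X) (Good le nb)) as [A [HGA HmaxA]].
  { intros Fam Hsub Htot.
    exact (Good_union Hpo Hnb Fam Hsub Htot). }
  pose proof (Good_max_total HGA HmaxA) as Htotal.
  set (g := fun x => proj1_sig (constructive_indefinite_description _ (Htotal x))).
  assert (HAg : forall x, A (x, g x)).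
  { intro x. unfold g. destruct (constructive_indefinite_description _ (Htotal x)). auto. }
  assert (Hpair : forall x y, exists g0, Sol le nb (x :: y :: nil) g0 /\ g0 x = g x /\ g0 y = g y).
  { intros x y. destruct (HGA (x :: y :: nil)) as [g0 [Hs Hag]].
    exists g0. split; auto. split; apply Hag; simpl; auto. }
  assert (G2 : forall x y, g x = y -> g y = y).
  { intros x y H. destruct (Hpair x y) as [g0 [[_ [S2 _]] [E1 E2]]].
    rewrite <- E2. apply (S2 x y); simpl; auto. congruence. }
  assert (G3 : forall x y, g x = x -> g y = y -> comparable le x y).
  { intros x y H1 H2. destruct (Hpair x y) as [g0 [[_ [_ [S3 _]]] [E1 E2]]].
    apply S3; simpl; auto; congruence. }
  assert (G4 : forall x y, x <> y -> g x = g y -> ~ comparable le x y).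
  { intros x y H1 H2. destruct (Hpair x y) as [g0 [[_ [_ [_ S4]]] [E1 E2]]].
    apply S4; simpl; auto; congruence. }
  exists (fun B => exists c, g c = c /\ B = (fun z => g z = c)).
  split; [|split].
  - split; [|split].
    + intros B [c [Hc ->]]. exists c. auto.
    + intro x. exists (fun z => g z = g x). split; auto.
      exists (g x). split; auto. apply (G2 x); auto.
    + intros B B' [c [Hc ->]] [c' [Hc' ->]] [x [Hx Hx']] y.
      rewrite <- Hx, <- Hx'. tauto.
  - intros B [c [Hc ->]] u v Hu Hv Hne. apply G4; auto. congruence.
  - exists (fun z => g z = z). split.
    + intros u v Hu Hv. apply G3; auto.
    + intros B [c [Hc ->]]. exists c. auto.
Qed.
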